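(* Let $\mathcal{H}_{1}$, $\mathcal{H}_{2}$ and $\mathcal{G}$ be three pdCGs such that both $\mathcal{H}_{1}$ and $\mathcal{H}_{2}$ are covered by $\mathcal{G}$ in the model inclusion order or, equivalently, such that $\mathcal{P}(\mathcal{H}_{1})$ and $\mathcal{P}(\mathcal{H}_{2})$ are two neighbouring submodels of $\mathcal{P}(\mathcal{G})$. Then, if $\mathcal{H}_{1}$ and $\mathcal{H}_{2}$ are $\preceq_{t}$-incomparable, it holds that $\mathcal{H}_{1}\wedge_{s}\mathcal{H}_{2}=\mathcal{H}_{1}\wedge_{t}\mathcal{H}_{2}$. On the other hand, if $\mathcal{H}_{1}\preceq_{t}\mathcal{H}_{2}$ then $\mathcal{H}_{1}\wedge_{s}\mathcal{H}_{2}=\mathcal{H}_{1}\wedge_{t}\mathcal{H}_{1}^{\prime}$ where, for the edge $(i,j)\in\mathbb E_{\mathcal G}$ involved, $\mathcal{H}_{1}$ and $\mathcal{H}_{1}^{\prime}$ are the two graphs $(V, E_{\mathcal{G}}\setminus\{(i,j)\}, \mathbb{L}_{\mathcal{G}}, \mathbb{E}_{\mathcal{G}} \setminus \{(i,j)\})$ and $(V, E_{\mathcal{G}}\setminus\{\tau(i,j)\}, \mathbb{L}_{\mathcal{G}}, \mathbb{E}_{\mathcal{G}} \setminus \{(i,j)\})$ (one each).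
   Context: Let $V=\{1,\dots,p\}$ and let $\tau$ be a twin-pairing function on $V$, i.e. $\tau(i)\in V$ with $\tau(\tau(i))=i$ and $\tau(i)\neq i$; it is extended to edges by $\tau(i,j)=(\tau(i),\tau(j))$ (endpoints reordered so the smaller comes first) and to sets elementwise. Fix a partition $(L,R)$ of $V$ with $\tau(L)=R$, numbered so that $L=\{1,\dots,q\}$, $R=\{q+1,\dots,p\}$. Let $F_V=\{(i,j): i,j\in V, i<j\}$, $F_L=\{(i,j)\in F_V: i<\tau(j)\}$, $F_R=\{(i,j)\in F_V: i>\tau(j)\}$. A coloured graph $\mathcal G=(\mathcal V,\mathcal E)$ consists of a partition $\mathcal V$ of $V$ into vertex colour classes and a partition $\mathcal E$ of an edge set $E\subseteq F_V$ into edge colour classes. It is a coloured graph for paired data (pdCG) if every colour class is either atomic (a single element) or twin-pairing (of the form $\{i,\tau(i)\}$ or $\{(i,j),\tau(i,j)\}$ with $(i,j)\neq\tau(i,j)$). The associated RCON model for paired data $\mathcal{P}(\mathcal G)$ is the family of Gaussian distributions whose concentration matrix has zero entries for missing edges and equal entries for vertices or edges in the same colour class; $\mathcal{P}$ denotes the family of all pdCGs on $V$. Every pdCG is equivalently represented by the quadruplet $(V,E,\mathbb L,\mathbb E)$ where $E$ is the union of the edge colour classes, $E_L=E\cap F_L$, $E_R=E\cap F_R$, $\mathbb L=\{i\in L:\{i\}\in\mathcal V\}$ and $\mathbb E=\{(i,j)\in E_L\cap\tau(E_R): \{(i,j)\}\in\mathcal E\}$. The model inclusion order is $\mathcal H\preceq_s\mathcal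 G$ iff $\mathcal P(\mathcal H)\subseteq\mathcal P(\mathcal G)$ (iff the edge set of $\mathcal H$ is contained in that of $\mathcal G$ and every vertex, resp. edge, colour class of $\mathcal H$ is a union of vertex, resp. edge, colour classes of $\mathcal G$); $\mathcal H$ is covered by $\mathcal G$ in this order if $\mathcal H\prec_s\mathcal G$ and no $\mathcal F\in\mathcal P$ satisfies $\mathcal H\prec_s\mathcal F\prec_s\mathcal G$; $\wedge_s$ denotes the meet (infimum) in the lattice $\langle\mathcal P,\preceq_s\rangle$. The twin order is $\mathcal H\preceq_t\mathcal G$ iff $E_{\mathcal H}\subseteq E_{\mathcal G}$, $\mathbb L_{\mathcal H}\subseteq\mathbb L_{\mathcal G}$ and $\mathbb E_{\mathcal H}\subseteq\mathbb E_{\mathcal G}$; $\langle\mathcal P,\preceq_t\rangle$ is a lattice whose meet is $\mathcal G\wedge_t\mathcal H=(V,E_{\mathcal G}\cap E_{\mathcal H},\mathbb L_{\mathcal G}\cap\mathbb L_{\mathcal H},\mathbb E_{\mathcal G}\cap\mathbb E_{\mathcal H})$. Two neighbouring submodels $\mathcal H_1,\mathcal H_2$ of $\mathcal G$ satisfy $\mathcal H_1\preceq_t\mathcal H_2$ iff, for some $(i,j)\in\mathbb E_{\mathcal G}$, $\mathcal H_2=(V,E_{\mathcal G},\mathbb L_{\mathcal G},\mathbb E_{\mathcal G}\setminus\{(i,j)\})$ and $\mathcal H_1$ is one of the two graphs named in the claim; otherwise they are $\preceq_t$-incomparable. *)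

(* Defs.v *)
(* Coloured graphs for paired data (pdCGs) on V = 'I_p
   (0-indexed: vertex k of the paper is k.-1 here). *)
From mathcomp Require Import all_boot all_order.
Set Implicit Arguments. Unset Strict Implicit. Unset Printing Implicit Defensive.

Section PdCG.
Variables (p q : nat) (tau : 'I_p -> 'I_p).

(* tau is a twin-pairing function (involutive, fixed-point free) and
   L = {0..q-1} is mapped onto R = {q..p-1}, i.e. tau(L) = R. *)
Definition twin_pairing : Prop :=
  [/\ involutive tau, (forall i, tau i != i) & (forall i : 'I_p, (i < q) = (q <= tau i))].

Definition vtx := 'I_p.
Definition edge := ('I_p * 'I_p)%type.

Definition tauE (e : edge) : edge :=
  if tau e.1 < tau e.2 then (tau e.1, tau e.2) else (tau e.2, tau e.1).

Definition F_V : {set edge} := [set e : edge | e.1 < e.2].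
Definition F_L : {set edge} := [set e in F_V | e.1 < tau e.2].
Definition F_R : {set edge} := [set e in F_V | tau e.2 < e.1].

Record cgraph := CGraph { cgV : {set {set vtx}} ; cgE : {set {set edge}} }.

Definition cg_edges (G : cgraph) : {set edge} := cover (cgE G).

Definition is_cgraph (G : cgraph) : bool :=
  [&& partition (cgV G) [set: vtx], cg_edges G \subset F_V
    & partition (cgE G) (cg_edges G)].

Definition is_pdCG (G : cgraph) : Prop :=
  is_cgraph G /\
  (forall C, C \in cgV G -> #|C| = 1 \/ exists i, C = [set i; tau i]) /\
  (forall C, C \in cgE G -> #|C| = 1 \/ exists e, e \in F_V /\ e != tauE e /\ C = [set e; tauE e]).

(* Quadruplet representation (E, LL, EE); V is implicit. *)
Definition cg_EL G := cg_edges G :&: F_L.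
Definition cg_ER G := cg_edges G :&: F_R.
Definition cg_LL (G : cgraph) : {set vtx} := [set i : vtx | (i < q) && ([set i] \in cgV G)].
Definition cg_EE (G : cgraph) : {set edge} :=
  [set e in cg_EL G :&: (tauE @: cg_ER G) | [set e] \in cgE G].

Definition quad := ({set edge} * {set vtx} * {set edge})%type.
Definition quad_of (G : cgraph) : quad := (cg_edges G, cg_LL G, cg_EE G).

Definition le_t (H G : cgraph) : bool :=
  [&& cg_edges H \subset cg_edges G, cg_LL H \subset cg_LL G & cg_EE H \subset cg_EE G].
Definition meet_t (Q1 Q2 : quad) : quad :=
  (Q1.1.1 :&: Q2.1.1, Q1.1.2 :&: Q2.1.2, Q1.2 :&: Q2.2).

Definition union_of (T : finType) (P : {set {set T}}) (C : {set T}) : Prop :=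
  exists S : {set {set T}}, S \subset P /\ cover S = C.

(* model inclusion order H <=_s G, i.e. P(H) \subseteq P(G) *)
Definition le_s (H G : cgraph) : Prop :=
  cg_edges H \subset cg_edges G /\
  (forall C, C \in cgV H -> union_of (cgV G) C) /\
  (forall C, C \in cgE H -> union_of (cgE G) C).

Definition lt_s (H G : cgraph) : Prop := le_s H G /\ H <> G.

Definition covered_s (H G : cgraph) : Prop :=
  lt_s H G /\ ~ (exists F, is_pdCG F /\ lt_s H F /\ lt_s F G).

Definition is_meet_s (H1 H2 M : cgraph) : Prop :=
  [/\ is_pdCG M, le_s M H1, le_s M H2 &
      forall F, is_pdCG F -> le_s F H1 -> le_s F H2 -> le_s F M].

End PdCG.

(* Main.v *)
Require Import Defs.
From mathcomp Require Import all_boot all_order.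
Set Implicit Arguments. Unset Strict Implicit. Unset Printing Implicit Defensive.


Section Gen.
Variable T : finType.
Implicit Types (P : {set {set T}}) (C D : {set T}).

Lemma union_of_closed P C x : trivIset P -> union_of P C -> x \in C -> pblock P x \subset C.
Proof.
move=> tI [S [SP <-]] /bigcupP[B BS xB].
rewrite (def_pblock tI (subsetP SP _ BS) xB).
by apply/subsetP=> y yB; apply/bigcupP; exists B.
Qed.

Lemma closed_union_of P C : C \subset cover P ->
  (forall x, x \in C -> pblock P x \subset C) -> union_of P C.
Proof.
move=> CP cl; exists [set B in P | B \subset C]; split.
  by apply/subsetP=> B; rewrite inE => /andP[].
apply/eqP; rewrite eqEsubset; apply/andP; split.
  by apply/bigcupsP=> B; rewrite inE => /andP[].
apply/subsetP=> x xC; apply/bigcupP; exists (pblock P x).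
  by rewrite inE pblock_mem ?cl ?(subsetP CP).
by rewrite mem_pblock (subsetP CP).
Qed.

Lemma pblock_sym P x y : trivIset P -> x \in cover P -> y \in cover P ->
  (y \in pblock P x) = (x \in pblock P y).
Proof.
move=> tI xP yP; apply/idP/idP=> h.
  by rewrite (same_pblock tI h) mem_pblock.
by rewrite (same_pblock tI h) mem_pblock.
Qed.

Lemma set1_inP P D x : partition P D ->
  ([set x] \in P) = (x \in D) && (pblock P x == [set x]).
Proof.
case/and3P=> /eqP cP tI _; apply/idP/andP=> [h|[xD /eqP <-]].
  have xc : x \in cover P by apply/bigcupP; exists [set x]; rewrite ?set11.
  by rewrite -cP xc (def_pblock tI h (set11 x)).
by rewrite pblock_mem // cP.
Qed.

Lemma cls_partition D (cls : T -> {set T}) :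
  (forall x, x \in D -> x \in cls x) ->
  (forall x, x \in D -> cls x \subset D) ->
  (forall x y, x \in D -> y \in cls x -> cls y = cls x) ->
  partition [set cls x | x in D] D.
Proof.
move=> xin sub clo; apply/and3P; split.
- rewrite eqEsubset; apply/andP; split.
    by apply/bigcupsP=> B /imsetP[x xD ->]; exact: sub.
  by apply/subsetP=> x xD; apply/bigcupP; exists (cls x); [apply: imset_f | exact: xin].
- apply/trivIsetP=> A B /imsetP[x xD ->] /imsetP[y yD ->] neq.
  apply/pred0P=> z /=; apply/negbTE/negP=> /andP[zx zy].
  have zD : z \in D by exact: (subsetP (sub x xD)).
  by move/eqP: neq; apply; rewrite -(clo x z xD zx) (clo y z yD zy).
- by apply/imsetP=> [[x xD /esym e]]; move: (xin x xD); rewrite e inE.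
Qed.

Lemma cls_pblock D (cls : T -> {set T}) x :
  (forall x, x \in D -> x \in cls x) ->
  (forall x, x \in D -> cls x \subset D) ->
  (forall x y, x \in D -> y \in cls x -> cls y = cls x) ->
  x \in D -> pblock [set cls x | x in D] x = cls x.
Proof.
move=> xin sub clo xD; have /and3P[_ tI _] := cls_partition xin sub clo.
by apply: def_pblock => //; [apply: imset_f | exact: xin].
Qed.

End Gen.


Section Twin.
Variables (T : finType) (t : T -> T).
Implicit Types (P : {set {set T}}) (C D : {set T}).

Definition shp P := forall x, x \in cover P -> pblock P x = [set x] \/ pblock P x = [set x; t x].

Lemma pb_shape P x : shp P -> x \in cover P ->
  pblock P x = if t x \in pblock P x then [set x; t x] else [set x].
Proof.
move=> sh xc; case: (sh x xc) => ->; case: ifP => //.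
by rewrite inE => /eqP ->; rewrite setUid.
by rewrite !inE eqxx orbT.
Qed.

Definition tcls P1 P2 x :=
  if (t x \in pblock P1 x) || (t x \in pblock P2 x) then [set x; t x] else [set x].

Lemma tcls_mem P1 P2 x : t x != x ->
  (t x \in tcls P1 P2 x) = (t x \in pblock P1 x) || (t x \in pblock P2 x).
Proof.
move=> nx; rewrite /tcls; case: ifP => c; first by rewrite !inE eqxx orbT.
by rewrite inE (negbTE nx).
Qed.

Lemma pair_neq1 (a b : T) : b != a -> ([set a; b] == [set a]) = false.
Proof.
move=> nb; apply/negbTE/eqP=> e.
have : b \in [set a; b] by rewrite !inE eqxx orbT.
by rewrite e inE (negbTE nb).
Qed.

Lemma single_nin_gen P D x : partition P D -> shp P -> x \in D -> t x != x ->
  ([set x] \in P) = (t x \notin pblock P x).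
Proof.
move=> pP sh xD nx; rewrite (set1_inP _ pP) xD /=.
have xc : x \in cover P by rewrite (cover_partition pP).
have E := pb_shape sh xc.
case c: (t x \in pblock P x); rewrite c in E; rewrite E.
  by rewrite pair_neq1.
by rewrite eqxx.
Qed.

Variables (P1 P2 : {set {set T}}) (D : {set T}).
Hypotheses (tI1 : trivIset P1) (tI2 : trivIset P2) (sh1 : shp P1) (sh2 : shp P2)
  (D1 : D \subset cover P1) (D2 : D \subset cover P2)
  (Dcl : forall x, x \in D -> (t x \in pblock P1 x) || (t x \in pblock P2 x) -> t x \in D)
  (tK : forall x, x \in D -> t (t x) = x).

Lemma tcls_in x : x \in D -> x \in tcls P1 P2 x.
Proof. by move=> _; rewrite /tcls; case: ifP; rewrite !inE eqxx. Qed.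

Lemma tcls_sub x : x \in D -> tcls P1 P2 x \subset D.
Proof.
move=> xD; rewrite /tcls; case: ifP=> c; apply/subsetP=> y; rewrite !inE.
  by case/orP=> /eqP ->; [|apply: Dcl].
by move/eqP ->.
Qed.

Lemma tcls_clo x y : x \in D -> y \in tcls P1 P2 x -> tcls P1 P2 y = tcls P1 P2 x.
Proof.
move=> xD; rewrite /tcls; case: ifP=> c; rewrite !inE; last by move/eqP->; rewrite c.
case/orP=> /eqP ->; first by rewrite c.
have txD := Dcl xD c.
rewrite tK // -!(pblock_sym _ (subsetP D1 _ xD) (subsetP D1 _ txD)) //.
rewrite -(pblock_sym _ (subsetP D2 _ xD) (subsetP D2 _ txD)) // c.
by rewrite setUC.
Qed.

Definition tpart := [set tcls P1 P2 x | x in D].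

Lemma tpart_partition : partition tpart D.
Proof. exact: cls_partition tcls_in tcls_sub tcls_clo. Qed.

Lemma tpart_pblock x : x \in D -> pblock tpart x = tcls P1 P2 x.
Proof. exact: cls_pblock tcls_in tcls_sub tcls_clo. Qed.

Lemma tpart_below1 x : x \in D -> pblock P1 x \subset pblock tpart x.
Proof.
move=> xD; rewrite tpart_pblock // (pb_shape sh1 (subsetP D1 _ xD)) /tcls.
case c: (t x \in pblock P1 x); first by rewrite subxx.
by case: ifP; rewrite ?subxx // sub1set !inE eqxx.
Qed.

Lemma tpart_below2 x : x \in D -> pblock P2 x \subset pblock tpart x.
Proof.
move=> xD; rewrite tpart_pblock // (pb_shape sh2 (subsetP D2 _ xD)) /tcls.
case c: (t x \in pblock P2 x); first by rewrite orbT subxx.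
by case: ifP; rewrite ?subxx // sub1set !inE eqxx.
Qed.

Lemma tpart_max (Q : {set {set T}}) x : x \in D -> x \in cover Q ->
  pblock P1 x \subset pblock Q x -> pblock P2 x \subset pblock Q x ->
  pblock tpart x \subset pblock Q x.
Proof.
move=> xD xQ s1 s2; rewrite tpart_pblock // /tcls; case: ifP=> c.
  apply/subsetP=> y; rewrite !inE; case/orP=> /eqP ->; first by rewrite mem_pblock.
  by case/orP: c=> h; [apply: (subsetP s1) | apply: (subsetP s2)].
by apply/subsetP=> y; rewrite inE => /eqP ->; rewrite mem_pblock.
Qed.

Lemma tpart_single x : x \in D -> t x != x ->
  (pblock tpart x == [set x]) = (t x \notin pblock P1 x) && (t x \notin pblock P2 x).
Proof.
move=> xD nx; rewrite tpart_pblock // /tcls; case: ifP=> c.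
  rewrite -negb_or c /=; apply/negbTE/eqP=> e.
  by move: (setU1r x (set11 (t x))); rewrite e inE (negbTE nx).
by rewrite eqxx -negb_or c.
Qed.

End Twin.


Section Conc.
Variables (p q : nat) (tau : 'I_p -> 'I_p).
Hypothesis tw : twin_pairing q tau.

Let tauK : involutive tau. Proof. by case: tw. Qed.
Let tau_neq i : tau i != i. Proof. by case: tw. Qed.
Let tau_inj : injective tau. Proof. exact: inv_inj tauK. Qed.

Notation tE := (tauE tau).

Lemma FV_lt (e : edge p) : (e \in F_V p) = (e.1 < e.2). Proof. by rewrite inE. Qed.

Lemma tauE_FV e : e \in F_V p -> tE e \in F_V p.
Proof.
rewrite !inE /tauE => lt; case: ifP => //= h.
rewrite ltn_neqAle leqNgt h andbT; apply/negP=> /eqP /val_inj /tau_inj E.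
by move: lt; rewrite E ltnn.
Qed.

Lemma tauEK e : e \in F_V p -> tE (tE e) = e.
Proof.
rewrite inE => lt; case: e lt => a b /= lt; rewrite /tauE /=.
case h: (tau a < tau b) => /=; rewrite !tauK.
  by rewrite lt.
by rewrite ltnNge (ltnW lt).
Qed.

Lemma FLR_disj e : e \in F_L tau -> e \notin F_R tau.
Proof. by rewrite !inE => /andP[_ h]; apply/negP=> /andP[_ h']; move: (ltn_trans h h'); rewrite ltnn. Qed.

Lemma FL_FV e : e \in F_L tau -> e \in F_V p.
Proof. by rewrite inE => /andP[]. Qed.
Lemma FR_FV e : e \in F_R tau -> e \in F_V p.
Proof. by rewrite inE => /andP[]. Qed.

Lemma tauE_neq e : e \in F_L tau -> tE e != e.
Proof.
rewrite !inE => /andP[lt1 lt2]; case: e lt1 lt2 => a b /= lt1 lt2.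
rewrite /tauE /=; case: ifP => h; apply/negP => /eqP [E1 E2].
  by move: (tau_neq a); rewrite E1 eqxx.
by move: lt2; rewrite -E2 tauK ltnn.
Qed.


Lemma cg_part (G : cgraph p) : is_cgraph G ->
  [/\ partition (cgV G) [set: 'I_p], trivIset (cgV G), cover (cgV G) = setT,
      cg_edges G \subset F_V p & partition (cgE G) (cg_edges G) /\ trivIset (cgE G)].
Proof.
case/and3P=> pV sE pE; split => //; first by case/and3P: pV.
  by case/and3P: pV => /eqP.
by split=> //; case/and3P: pE.
Qed.

Lemma le_sP (H G : cgraph p) : is_cgraph H -> is_cgraph G ->
  le_s H G <-> [/\ cg_edges H \subset cg_edges G,
     (forall x, pblock (cgV G) x \subset pblock (cgV H) x) &
     (forall x, x \in cg_edges H -> pblock (cgE G) x \subset pblock (cgE H) x)].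
Proof.
move=> /cg_part[_ tVH cVH _ [_ tEH]] /cg_part[_ tVG cVG _ [_ tEG]].
split.
  case=> sE [hV hE]; split=> // x.
    have xc : x \in cover (cgV H) by rewrite cVH inE.
    apply: (union_of_closed tVG (hV _ (pblock_mem xc))).
    by rewrite mem_pblock.
  move=> xE; apply: (union_of_closed tEG (hE _ (pblock_mem xE))).
  by rewrite mem_pblock.
case=> sE hV hE; split=> //; split=> C CH.
  apply: closed_union_of; first by rewrite cVG subsetT.
  move=> x xC; rewrite -(def_pblock tVH CH xC); exact: hV.
have CE : C \subset cg_edges H by apply: bigcup_sup.
apply: closed_union_of; first exact: subset_trans CE sE.
move=> x xC; rewrite -(def_pblock tEH CH xC); apply: hE.
exact: (subsetP CE).
Qed.

Lemma pb_cover (T : finType) (P : {set {set T}}) x y : trivIset P ->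
  y \in pblock P x -> y \in cover P.
Proof. by move=> tI h; rewrite -mem_pblock (same_pblock tI h). Qed.

Lemma pdV_shp (G : cgraph p) : is_pdCG tau G -> shp tau (cgV G).
Proof.
case=> cg [hV _] x xc; have := hV _ (pblock_mem xc).
have xin : x \in pblock (cgV G) x by rewrite mem_pblock.
case=> [/eqP/cards1P[y E]|[i E]]; first by left; move: xin; rewrite E inE => /eqP <-.
right; move: xin; rewrite E !inE; case/orP=> /eqP ->; first by [].
by rewrite tauK setUC.
Qed.

Lemma pdE_shp (G : cgraph p) : is_pdCG tau G -> shp (tauE tau) (cgE G).
Proof.
case=> cg [_ hE] x xc; have := hE _ (pblock_mem xc).
have xin : x \in pblock (cgE G) x by rewrite mem_pblock.
case=> [/eqP/cards1P[y E]|[i [iF [_ E]]]]; first by left; move: xin; rewrite E inE => /eqP <-.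
right; move: xin; rewrite E !inE; case/orP=> /eqP ->; first by [].
by rewrite tauEK // setUC.
Qed.




Lemma single_nin (H : cgraph p) g : is_pdCG tau H -> g \in cg_edges H -> tE g != g ->
  ([set g] \in cgE H) = (tE g \notin pblock (cgE H) g).
Proof.
move=> pd gE ng; have [_ _ _ _ [pE _]] := cg_part (proj1 pd).
rewrite (set1_inP _ pE) gE /=.
have E := pb_shape (pdE_shp pd) gE.
case c: (tE g \in pblock (cgE H) g); rewrite c in E; rewrite E.
  by rewrite pair_neq1 // !inE eqxx orbT.
by rewrite eqxx.
Qed.

Lemma EE_char (H : cgraph p) g : is_pdCG tau H ->
  (g \in cg_EE tau H) = [&& g \in cg_edges H, g \in F_L tau, tE g \in cg_edges H,
                             tE g \in F_R tau & tE g \notin pblock (cgE H) g].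
Proof.
move=> pd; rewrite /cg_EE /cg_EL /cg_ER inE !in_setI.
case gE: (g \in cg_edges H) => //=; case gL: (g \in F_L tau) => //=.
have gV := FL_FV gL.
have -> : (g \in tE @: (cg_edges H :&: F_R tau)) = (tE g \in cg_edges H :&: F_R tau).
  apply/imsetP/idP=> [[x xR ->]|h]; last by exists (tE g); rewrite // tauEK.
  by rewrite tauEK // (FR_FV (setIP xR).2).
rewrite in_setI single_nin // ?tauE_neq //.
by rewrite -!andbA.
Qed.

End Conc.


Section Meet.
Variables (p q : nat) (tau : 'I_p -> 'I_p).
Hypothesis tw : twin_pairing q tau.
Let tauK : involutive tau. Proof. by case: tw. Qed.
Let tau_neq i : tau i != i. Proof. by case: tw. Qed.
Notation tE := (tauE tau).

Variables H1 H2 : cgraph p.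
Hypotheses (pd1 : is_pdCG tau H1) (pd2 : is_pdCG tau H2).

Notation E1 := (cg_edges H1).
Notation E2 := (cg_edges H2).

Definition mE := [set e in E1 :&: E2 | (tE e \in E1 :&: E2) ||
   ((tE e \notin pblock (cgE H1) e) && (tE e \notin pblock (cgE H2) e))].

Definition meetG : cgraph p :=
  CGraph (tpart tau (cgV H1) (cgV H2) setT) (tpart tE (cgE H1) (cgE H2) mE).

Let cp1 := cg_part (proj1 pd1).
Let cp2 := cg_part (proj1 pd2).

Lemma mE_sub g : g \in mE -> g \in E1 /\ g \in E2.
Proof. by rewrite !inE => /andP[/andP[]]. Qed.

Let VtI1 : trivIset (cgV H1). Proof. by case: cp1. Qed.
Let VtI2 : trivIset (cgV H2). Proof. by case: cp2. Qed.
Let EtI1 : trivIset (cgE H1). Proof. by case: cp1 => _ _ _ _ []. Qed.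
Let EtI2 : trivIset (cgE H2). Proof. by case: cp2 => _ _ _ _ []. Qed.
Let VD1 : [set: 'I_p] \subset cover (cgV H1). Proof. by case: cp1 => _ _ c _ _; rewrite c subxx. Qed.
Let VD2 : [set: 'I_p] \subset cover (cgV H2). Proof. by case: cp2 => _ _ c _ _; rewrite c subxx. Qed.
Let VDcl x : x \in [set: 'I_p] -> (tau x \in pblock (cgV H1) x) || (tau x \in pblock (cgV H2) x) -> tau x \in [set: 'I_p].
Proof. by move=> *; rewrite inE. Qed.
Let VtK x : x \in [set: 'I_p] -> tau (tau x) = x. Proof. by rewrite tauK. Qed.
Let ED1 : mE \subset cover (cgE H1). Proof. by apply/subsetP=> g /mE_sub[]. Qed.
Let ED2 : mE \subset cover (cgE H2). Proof. by apply/subsetP=> g /mE_sub[]. Qed.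
Let FV1 g : g \in E1 -> g \in F_V p.
Proof. by case: cp1 => _ _ _ /subsetP h _; apply: h. Qed.
Let EtK g : g \in mE -> tE (tE g) = g.
Proof. by move=> /mE_sub[/FV1 h _]; rewrite (tauEK tw). Qed.
Let EDcl g : g \in mE -> (tE g \in pblock (cgE H1) g) || (tE g \in pblock (cgE H2) g) -> tE g \in mE.
Proof.
move=> gM c; have tin : tE g \in E1 :&: E2.
  by move: gM; rewrite inE -negb_or c orbF => /andP[].
have [g1 g2] := mE_sub gM.
by rewrite inE tin /= EtK // inE g1 g2.
Qed.

Lemma meet_edges : cg_edges meetG = mE.
Proof. exact: cover_partition (tpart_partition EtI1 EtI2 ED1 ED2 EDcl EtK). Qed.

Lemma meet_pd : is_pdCG tau meetG.
Proof.
split; last split.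
- apply/and3P; split.
  + exact: tpart_partition VtI1 VtI2 VD1 VD2 VDcl VtK.
  + rewrite meet_edges; apply/subsetP=> g /mE_sub[/FV1 //].
  + rewrite meet_edges; exact: tpart_partition EtI1 EtI2 ED1 ED2 EDcl EtK.
- move=> C /imsetP[x _ ->]; rewrite /tcls; case: ifP=> _.
    by right; exists x.
  by left; rewrite cards1.
- move=> C /imsetP[x xM ->]; rewrite /tcls; case: ifP=> _; last by left; rewrite cards1.
  case: (eqVneq (tE x) x) => [->|nx]; first by left; rewrite setUid cards1.
  right; exists x; split; first by case: (mE_sub xM) => /FV1.
  by split; rewrite // eq_sym.
Qed.

Lemma meet_le1 : le_s meetG H1.
Proof.
apply/le_sP => //; first exact: (proj1 meet_pd); first exact: (proj1 pd1).
rewrite meet_edges; split.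
- by apply/subsetP=> g /mE_sub[].
- move=> x; exact: (tpart_below1 VtI1 VtI2 (pdV_shp tw pd1) VD1 VD2 VDcl VtK (in_setT x)).
- move=> x xM; exact: (tpart_below1 EtI1 EtI2 (pdE_shp tw pd1) ED1 ED2 EDcl EtK xM).
Qed.

Lemma meet_le2 : le_s meetG H2.
Proof.
apply/le_sP => //; first exact: (proj1 meet_pd); first exact: (proj1 pd2).
rewrite meet_edges; split.
- by apply/subsetP=> g /mE_sub[].
- move=> x; exact: (tpart_below2 VtI1 VtI2 (pdV_shp tw pd2) VD1 VD2 VDcl VtK (in_setT x)).
- move=> x xM; exact: (tpart_below2 EtI1 EtI2 (pdE_shp tw pd2) ED1 ED2 EDcl EtK xM).
Qed.

Lemma meet_max F : is_pdCG tau F -> le_s F H1 -> le_s F H2 -> le_s F meetG.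
Proof.
move=> pdF /le_sP - /(_ (proj1 pdF) (proj1 pd1)) [sE1 hV1 hE1].
move=> /le_sP - /(_ (proj1 pdF) (proj1 pd2)) [sE2 hV2 hE2].
have [_ tVF cVF _ [_ tEF]] := cg_part (proj1 pdF).
have sM : cg_edges F \subset mE.
  apply/subsetP=> g gF; have g1 := subsetP sE1 _ gF; have g2 := subsetP sE2 _ gF.
  rewrite inE in_setI g1 g2 /=.
  case: (boolP (tE g \in E1 :&: E2)) => //= nt.
  apply/andP; split; apply/negP=> h; move/negP: nt; apply.
    have tF : tE g \in cg_edges F by apply: (pb_cover tEF); apply: (subsetP (hE1 _ gF)).
    by rewrite inE (subsetP sE1 _ tF) (subsetP sE2 _ tF).
  have tF : tE g \in cg_edges F by apply: (pb_cover tEF); apply: (subsetP (hE2 _ gF)).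
  by rewrite inE (subsetP sE1 _ tF) (subsetP sE2 _ tF).
apply/le_sP; [exact: (proj1 pdF) | exact: (proj1 meet_pd) |].
rewrite meet_edges; split => //.
- move=> x; rewrite /meetG /=.
  by apply: (tpart_max VtI1 VtI2 VD1 VD2 VDcl VtK (in_setT x)); rewrite ?cVF ?inE.
- move=> x xF; rewrite /meetG /=.
  apply: (tpart_max EtI1 EtI2 ED1 ED2 EDcl EtK (subsetP sM _ xF)) => //.
  exact: hE1. exact: hE2.
Qed.

Lemma meet_is : is_meet_s tau H1 H2 meetG.
Proof. split; [exact: meet_pd | exact: meet_le1 | exact: meet_le2 | exact: meet_max]. Qed.


Let pV1 : partition (cgV H1) [set: 'I_p]. Proof. by case: cp1. Qed.
Let pV2 : partition (cgV H2) [set: 'I_p]. Proof. by case: cp2. Qed.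

Lemma meet_LL : cg_LL q meetG = cg_LL q H1 :&: cg_LL q H2.
Proof.
apply/setP=> i; rewrite !inE.
rewrite (single_nin_gen pV1 (pdV_shp tw pd1) (in_setT i) (tau_neq i)).
rewrite (single_nin_gen pV2 (pdV_shp tw pd2) (in_setT i) (tau_neq i)).
rewrite /meetG /= (set1_inP _ (tpart_partition VtI1 VtI2 VD1 VD2 VDcl VtK)) in_setT /=.
rewrite (tpart_single VtI1 VtI2 VD1 VD2 VDcl VtK (in_setT i) (tau_neq i)).
by case: (i < q); case: (tau i \in _); case: (tau i \in _).
Qed.

Lemma meet_EE g : (g \in cg_EE tau meetG) =
  [&& g \in mE, tE g \in mE, g \in cg_EE tau H1 & g \in cg_EE tau H2].
Proof.
rewrite !(EE_char tw) //; last exact: meet_pd.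
rewrite meet_edges; apply/idP/idP.
  case/and5P => gM gL tM tR nin.
  have [g1 g2] := mE_sub gM; have [t1 t2] := mE_sub tM.
  rewrite gM tM /= g1 gL t1 tR g2 t2 /=.
  move: nin; rewrite /meetG /= (tpart_pblock EtI1 EtI2 ED1 ED2 EDcl EtK gM).
  by rewrite tcls_mem ?(tauE_neq tw) // negb_or.
case/and4P => gM tM /and5P[_ gL _ tR n1] /and5P[_ _ _ _ n2].
rewrite gM gL tM tR /= /meetG /= (tpart_pblock EtI1 EtI2 ED1 ED2 EDcl EtK gM).
by rewrite tcls_mem ?(tauE_neq tw) // negb_or n1 n2.
Qed.

End Meet.


Lemma cg_eq_dec p (G H : cgraph p) : G = H \/ G <> H.
Proof.
case: G H => a b [c d].
case: (eqVneq a c) => [->|n]; last by right=> [[/eqP]]; rewrite (negbTE n).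
case: (eqVneq b d) => [->|n]; first by left.
by right=> [[/eqP]]; rewrite (negbTE n).
Qed.

Section Trouble.
Variables (p q : nat) (tau : 'I_p -> 'I_p).
Hypothesis tw : twin_pairing q tau.
Notation tE := (tauE tau).

Variables G H1 H2 : cgraph p.
Hypotheses (pdG : is_pdCG tau G) (pd1 : is_pdCG tau H1) (pd2 : is_pdCG tau H2)
  (cov1 : covered_s tau H1 G) (cov2 : covered_s tau H2 G).
Variable e : edge p.
Hypotheses (he1 : e \in cg_edges H1) (he2 : e \in cg_edges H2)
  (hf1 : tE e \notin cg_edges H1) (hf2 : tE e \in pblock (cgE H2) e).

Notation EG := (cg_edges G).
Notation f := (tE e).

Lemma covered_eq (H F : cgraph p) : covered_s tau H G -> is_pdCG tau F ->
  le_s H F -> le_s F G -> F <> G -> H = F.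
Proof.
move=> [_ nex] pdF hF FG nFG; case: (cg_eq_dec H F) => // nHF.
by case: nex; exists F; split=> //; split; split.
Qed.

Lemma trouble : le_t q tau H1 H2.
Proof.
have [_ tVG cVG sFG [pEG tEG]] := cg_part (proj1 pdG).
have [_ _ _ _ [pE2 tE2]] := cg_part (proj1 pd2).
have [_ _ _ _ [pE1 tE1]] := cg_part (proj1 pd1).
have [sE1 hV1 hEd1] := (le_sP (proj1 pd1) (proj1 pdG)).1 cov1.1.1.
have [sE2 hV2 hEd2] := (le_sP (proj1 pd2) (proj1 pdG)).1 cov2.1.1.
have eG : e \in EG := subsetP sE1 _ he1.
have eF : e \in F_V p := subsetP sFG _ eG.
have fe : f != e by apply: contraNneq hf1 => ->.
have f2 : f \in cg_edges H2 := pb_cover tE2 hf2.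
have fG : f \in EG := subsetP sE2 _ f2.
have pGe : pblock (cgE G) e = [set e].
  have E := pb_shape (pdE_shp tw pdG) eG.
  case c: (f \in pblock (cgE G) e); rewrite c in E; rewrite E //.
  have : f \in pblock (cgE H1) e by apply: (subsetP (hEd1 _ he1)); rewrite c.
  by move/(pb_cover tE1); rewrite (negbTE hf1).
have pGf : pblock (cgE G) f = [set f].
  have E := pb_shape (pdE_shp tw pdG) fG; rewrite (tauEK tw eF) in E.
  case c: (e \in pblock (cgE G) f); rewrite c in E; rewrite E //.
  move: c; rewrite (pblock_sym tEG fG eG) pGe inE => /eqP ef.
  by move: fe; rewrite ef eqxx.
pose D1 := EG :\ f.
have in1 x : x \in D1 -> x \in pblock (cgE G) x.
  by rewrite !inE mem_pblock => /andP[].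
have sub1 x : x \in D1 -> pblock (cgE G) x \subset D1.
  move=> xD; apply/subsetP=> y yx; rewrite !inE (pb_cover tEG yx) andbT.
  apply/eqP=> yf; move: yx; rewrite yf => /(same_pblock tEG); rewrite pGf => h.
  have := in1 x xD; rewrite -h inE => /eqP xf.
  by move: xD; rewrite xf !inE eqxx.
have clo1 x y : x \in D1 -> y \in pblock (cgE G) x -> pblock (cgE G) y = pblock (cgE G) x.
  by move=> _ /(same_pblock tEG).
pose F1 := CGraph (cgV G) [set pblock (cgE G) x | x in D1].
have pF1 : partition (cgE F1) D1 := cls_partition in1 sub1 clo1.
have edF1 : cg_edges F1 = D1 := cover_partition pF1.
have pbF1 x : x \in D1 -> pblock (cgE F1) x = pblock (cgE G) x := cls_pblock in1 sub1 clo1.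
have pdF1 : is_pdCG tau F1.
  split; last split.
  - apply/and3P; split; first by case/and3P: (proj1 pdG).
      by rewrite edF1; apply: subset_trans sFG; apply: subD1set.
    by rewrite edF1.
  - exact: (proj1 (proj2 pdG)).
  - move=> C /imsetP[x xD ->]; apply: (proj2 (proj2 pdG)); apply: pblock_mem.
    by move: xD; rewrite !inE => /andP[].
have F1G : le_s F1 G.
  apply/le_sP; [exact: (proj1 pdF1) | exact: (proj1 pdG) |].
  rewrite edF1; split; first exact: subD1set.
    by move=> x; apply: subxx.
  by move=> x xD; rewrite pbF1.
have nF1G : F1 <> G.
  move=> E; have : f \in cg_edges F1 by rewrite E.
  by rewrite edF1 !inE eqxx.
have H1F1 : le_s H1 F1.
  apply/le_sP; [exact: (proj1 pd1) | exact: (proj1 pdF1) |].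
  have sD : cg_edges H1 \subset D1.
    apply/subsetP=> x x1; rewrite !inE (subsetP sE1 _ x1) andbT.
    by apply: contraNneq hf1 => <-.
  rewrite edF1; split => //.
  by move=> x x1; rewrite pbF1 ?(subsetP sD) //; apply: hEd1.
have eq1 : H1 = F1 := covered_eq cov1 pdF1 H1F1 F1G nF1G.
pose cls2 x := if x \in [set e; f] then [set e; f] else pblock (cgE G) x.
have in2 x : x \in EG -> x \in cls2 x.
  by rewrite /cls2; case: ifP => // _; rewrite mem_pblock.
have sub2 x : x \in EG -> cls2 x \subset EG.
  move=> xG; rewrite /cls2; case: ifP => _.
    by apply/subsetP=> y; rewrite !inE => /orP[] /eqP ->.
  by apply/subsetP=> y /(pb_cover tEG).
have clo2 x y : x \in EG -> y \in cls2 x -> cls2 y = cls2 x.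
  move=> xG; rewrite /cls2; case: ifP => hx.
    by move=> ->.
  move=> yx; have yn : y \notin [set e; f].
    rewrite !inE; apply/negP=> /orP[] /eqP yef; move: yx; rewrite yef.
      move/(same_pblock tEG); rewrite pGe => h; have := mem_pblock (cgE G) x.
      by rewrite xG -h inE => /eqP xe; move: hx; rewrite xe !inE eqxx.
    move/(same_pblock tEG); rewrite pGf => h; have := mem_pblock (cgE G) x.
    by rewrite xG -h inE => /eqP xe; move: hx; rewrite xe !inE eqxx orbT.
  by rewrite (negbTE yn) (same_pblock tEG yx).
pose F2 := CGraph (cgV G) [set cls2 x | x in EG].
have pF2 : partition (cgE F2) EG := cls_partition in2 sub2 clo2.
have edF2 : cg_edges F2 = EG := cover_partition pF2.
have pbF2 x : x \in EG -> pblock (cgE F2) x = cls2 x := cls_pblock in2 sub2 clo2.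
have pdF2 : is_pdCG tau F2.
  split; last split.
  - apply/and3P; split; first by case/and3P: (proj1 pdG).
      by rewrite edF2.
    by rewrite edF2.
  - exact: (proj1 (proj2 pdG)).
  - move=> C /imsetP[x xG ->]; rewrite /cls2; case: ifP => _.
      by right; exists e; split=> //; split=> //; rewrite eq_sym.
    by apply: (proj2 (proj2 pdG)); apply: pblock_mem.
have F2G : le_s F2 G.
  apply/le_sP; [exact: (proj1 pdF2) | exact: (proj1 pdG) |].
  rewrite edF2; split; [exact: subxx | by move=> x; exact: subxx |].
  move=> x xG; rewrite pbF2 // /cls2; case: ifP => // hx.
  move: hx; rewrite !inE => /orP[] /eqP ->; [rewrite pGe | rewrite pGf];
    by rewrite sub1set !inE eqxx ?orbT.
have nF2G : F2 <> G.
  move=> E; have : pblock (cgE F2) e = pblock (cgE G) e by rewrite E.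
  rewrite pbF2 // pGe /cls2 !inE eqxx /= => h.
  have : f \in [set e; f] by rewrite !inE eqxx orbT.
  by rewrite h inE (negbTE fe).
have H2F2 : le_s H2 F2.
  apply/le_sP; [exact: (proj1 pd2) | exact: (proj1 pdF2) |].
  rewrite edF2; split => // x x2; rewrite pbF2 ?(subsetP sE2) // /cls2.
  case: ifP => hx; last exact: hEd2.
  have pe : pblock (cgE H2) e = [set e; f].
    by have := pb_shape (pdE_shp tw pd2) he2; rewrite hf2.
  have -> : pblock (cgE H2) x = pblock (cgE H2) e.
    apply: same_pblock => //; rewrite pe; exact: hx.
  by rewrite pe.
have eq2 : H2 = F2 := covered_eq cov2 pdF2 H2F2 F2G nF2G.
rewrite eq1 eq2 /le_t edF1 edF2 subD1set /= subxx /=.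
apply/subsetP=> g; rewrite !(EE_char tw) // edF1 edF2.
case/and5P=> gD gL tD tR nin.
have gG : g \in EG by move: gD; rewrite !inE => /andP[].
have tG : tE g \in EG by move: tD; rewrite !inE => /andP[].
have gn : g \notin [set e; f].
  rewrite !inE; apply/negP=> /orP[] /eqP ge.
    by move: tD; rewrite ge !inE eqxx.
  by move: gD; rewrite ge !inE eqxx.
rewrite gG gL tG tR /= pbF2 // /cls2 (negbTE gn).
by rewrite -pbF1.
Qed.

End Trouble.


Lemma mE_calc p q (tau : 'I_p -> 'I_p) (tw : twin_pairing q tau) (H1 H2 : cgraph p)
  (S : {set edge p}) x y :
  is_pdCG tau H1 -> is_pdCG tau H2 ->
  cg_edges H1 = S :\ x -> cg_edges H2 = S ->
  S \subset F_V p -> x \in S -> y \in S -> tauE tau y = x -> tauE tau x = y ->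
  x \in pblock (cgE H2) y ->
  mE tau H1 H2 = S :\ x :\ y.
Proof.
move=> pd1 pd2 E1 E2 SF xS yS txy tyx pr.
have [_ _ _ _ [_ tE1]] := cg_part (proj1 pd1).
have [_ _ _ _ [_ tE2]] := cg_part (proj1 pd2).
apply/setP=> g; rewrite /mE inE !in_setI E1 E2 !inE.
apply/idP/idP.
  case/andP=> /andP[/andP[gx gS] _] h; rewrite gx gS !andbT.
  by apply/eqP=> gy; move: h; rewrite gy txy eqxx /= pr /= andbF.
case/andP=> gy /andP[gx gS]; rewrite gx gS /=.
case: (boolP (tauE tau g \in S)) => tS.
  rewrite !andbT; apply/orP; left; apply/eqP=> tx.
  have : tauE tau (tauE tau g) = g by rewrite (tauEK tw) // (subsetP SF).
  by rewrite tx tyx => yg; move: gy; rewrite yg eqxx.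
rewrite andbF /=; apply/andP; split; apply/negP=> h.
  by move: (pb_cover tE1 h : _ \in cg_edges H1); rewrite E1 !inE (negbTE tS) andbF.
by move: (pb_cover tE2 h : _ \in cg_edges H2); rewrite E2 (negbTE tS).
Qed.

Unset Implicit Arguments.
Theorem corollary10 (p q : nat) (tau : 'I_p -> 'I_p) :
  twin_pairing q tau ->
  forall H1 H2 G : cgraph p,
    is_pdCG tau H1 -> is_pdCG tau H2 -> is_pdCG tau G ->
    covered_s tau H1 G -> covered_s tau H2 G ->
    (* twin-incomparable case *)
    ((~~ le_t q tau H1 H2 /\ ~~ le_t q tau H2 H1 ->
      exists M, is_meet_s tau H1 H2 M /\
                quad_of q tau M = meet_t (quad_of q tau H1) (quad_of q tau H2))
    /\
    (* H1 <=_t H2 case *)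
    (le_t q tau H1 H2 ->
      forall ij : edge p, ij \in cg_EE tau G ->
      quad_of q tau H2 = (cg_edges G, cg_LL q G, cg_EE tau G :\ ij) ->
      forall Q1' : quad p,
      let A := (cg_edges G :\ ij, cg_LL q G, cg_EE tau G :\ ij) in
      let B := (cg_edges G :\ tauE tau ij, cg_LL q G, cg_EE tau G :\ ij) in
      (quad_of q tau H1 = A /\ Q1' = B) \/ (quad_of q tau H1 = B /\ Q1' = A) ->
      exists M, is_meet_s tau H1 H2 M /\
                quad_of q tau M = meet_t (quad_of q tau H1) Q1')).
Proof.
move=> tw H1 H2 G pd1 pd2 pdG cov1 cov2.
have [_ _ _ _ [_ tE1]] := cg_part (proj1 pd1).
have [_ _ _ _ [_ tE2]] := cg_part (proj1 pd2).
have [_ _ _ sFG _] := cg_part (proj1 pdG).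
split.
  case=> n12 n21; exists (meetG tau H1 H2); split; first exact: (meet_is tw pd1 pd2).
  have mEq : mE tau H1 H2 = cg_edges H1 :&: cg_edges H2.
    apply/setP=> g; rewrite /mE inE.
    case gi: (g \in cg_edges H1 :&: cg_edges H2) => //=.
    case: (boolP (tauE tau g \in cg_edges H1 :&: cg_edges H2)) => //= nt.
    have [g1 g2] : g \in cg_edges H1 /\ g \in cg_edges H2 by move: gi; rewrite inE => /andP.
    apply/andP; split; apply/negP=> h.
      have t1 := pb_cover tE1 h.
      have nt2 : tauE tau g \notin cg_edges H2 by apply: contra nt => t2; rewrite inE t1 t2.
      by move: n21; rewrite (trouble tw pdG pd2 pd1 cov2 cov1 g2 g1 nt2 h).
    have t2 := pb_cover tE2 h.
    have nt1 : tauE tau g \notin cg_edges H1 by apply: contra nt => t1; rewrite inE t1 t2.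
    by move: n12; rewrite (trouble tw pdG pd1 pd2 cov1 cov2 g1 g2 nt1 h).
  rewrite /quad_of /meet_t /= (meet_edges tw pd1 pd2) mEq (meet_LL tw pd1 pd2).
  congr pair; apply/setP=> g; rewrite (meet_EE tw pd1 pd2) mEq !in_setI.
  case: (boolP (g \in cg_EE tau H1)) => h1; last by rewrite /= !andbF.
  case: (boolP (g \in cg_EE tau H2)) => h2; last by rewrite /= !andbF.
  move: h1 h2; rewrite !(EE_char tw) // => /and5P[g1 _ t1 _ _] /and5P[g2 _ t2 _ _].
  by rewrite g1 g2 t1 t2.
move=> _ ij ijG hq2 Q1' A B hAB.
move: hq2; rewrite /quad_of => -[E2eq LL2eq EE2eq].
have := ijG; rewrite (EE_char tw) // => /and5P[ijE ijL tE tR _].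
set t := tauE tau ij in tE tR *.
have ijF : ij \in F_V p := FL_FV ijL.
have ttij : tauE tau t = ij by rewrite /t (tauEK tw).
have tF : t \in F_V p := FR_FV tR.
have tij2 : t \in pblock (cgE H2) ij.
  have : ij \notin cg_EE tau H2 by rewrite EE2eq !inE eqxx.
  rewrite (EE_char tw) // E2eq ijE ijL tE tR /=.
  by rewrite negbK.
have ij2 : ij \in cg_edges H2 by rewrite E2eq.
have t2 : t \in cg_edges H2 by rewrite E2eq.
have ijt2 : ij \in pblock (cgE H2) t.
  by rewrite (pblock_sym tE2 t2 ij2).
have EEM g : g \in cg_EE tau G :\ ij -> [/\ g \in cg_edges G, g != ij, g != t &
    [/\ tauE tau g \in cg_edges G, tauE tau g != ij & tauE tau g != t]].
  rewrite inE => /andP[gi]; rewrite (EE_char tw) // => /and5P[gG gL tgG tgR _].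
  have h1 : g != t by apply/eqP=> e; move: (FLR_disj gL); rewrite e tR.
  have h2 : tauE tau g != ij by apply/eqP=> e; move: (FLR_disj ijL); rewrite -e tgR.
  have h3 : tauE tau g != t.
    apply/eqP=> e; have : tauE tau (tauE tau g) = g by rewrite (tauEK tw) // (FL_FV gL).
    by rewrite e ttij => ge; move: gi; rewrite ge inE eqxx.
  have h0 : g != ij by move: gi; rewrite inE.
  by split.
have EEq (S : {set edge p}) : (forall g, (g \in S) = [&& g \in cg_edges G, g != ij & g != t]) ->
   forall (E1eq : cg_EE tau H1 = cg_EE tau G :\ ij),
   mE tau H1 H2 = S ->
   cg_EE tau (meetG tau H1 H2) = (cg_EE tau G :\ ij) :&: (cg_EE tau G :\ ij).
  move=> Sm E1eq mEeq; apply/setP=> g.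
  rewrite (meet_EE tw pd1 pd2) E1eq EE2eq mEeq in_setI !Sm.
  case: (boolP (g \in cg_EE tau G :\ ij)) => h; last by rewrite /= !andbF.
  by have [-> -> -> [-> -> ->]] := EEM g h.
case: hAB => [[hq1 ->]|[hq1 ->]]; move: hq1; rewrite /quad_of => -[E1eq LL1eq EE1eq];
  rewrite ?E1eq ?EE1eq -/t;
  exists (meetG tau H1 H2); (split; first exact: (meet_is tw pd1 pd2));
  rewrite /quad_of /meet_t /= (meet_edges tw pd1 pd2) (meet_LL tw pd1 pd2) LL1eq LL2eq.
- have mEeq := mE_calc tw pd1 pd2 E1eq E2eq sFG ijE tE ttij erefl ijt2.
  rewrite (EEq (cg_edges G :\ ij :\ t)) //; last first.
    by move=> g; rewrite !inE; case: (g == ij); case: (g == t); case: (g \in cg_edges G).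
  rewrite mEeq; congr (_, _, _); apply/setP=> g; rewrite !inE.
  by case: (g == ij); case: (g == t); case: (g \in cg_edges G).
- have mEeq := mE_calc tw pd1 pd2 E1eq E2eq sFG tE ijE erefl ttij tij2.
  rewrite (EEq (cg_edges G :\ t :\ ij)) //; last first.
    by move=> g; rewrite !inE; case: (g == ij); case: (g == t); case: (g \in cg_edges G).
  rewrite mEeq; congr (_, _, _); apply/setP=> g; rewrite !inE.
  by case: (g == ij); case: (g == t); case: (g \in cg_edges G).
Qed.
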